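(* For every integer $k\ge 1$ and every real $t$, $$R_{k}(t^{2})=-R_{k-1}(t^{2})+4t\,T_{2k-1}(t)+(-1)^{k-1}8t^{2}.$$ Consequently, for every $t\in(0,1]$ and every integer $k\ge 0$, $$\frac{|R_{k}(t^{2})|}{t}\leq 4(2k+1)t+4\sum_{j=1}^{k}\min\{1,(2j-1)t\}.$$
   Context: $T_k$ denotes the Chebyshev polynomial of the first kind: $T_0(t)=1$, $T_1(t)=t$, $T_{k+1}(t)=2tT_k(t)-T_{k-1}(t)$. For each integer $k\ge 0$, $P_k$ and $Q_k$ are the unique polynomials such that $T_{2k}(t)=(-1)^k+P_k(t^2)$ and $T_{2k+1}(t)=(-1)^k(2k+1)t+t\,Q_k(t^2)$ for all real $t$ (so $P_k(0)=Q_k(0)=0$). For $k\ge 0$ define $R_k(x):=2P_k(x)-4(-1)^k(2k+1)x$. *)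

(* Defs.v *)
From HB Require Import structures.
From mathcomp Require Import all_boot all_order all_algebra.
Set Implicit Arguments. Unset Strict Implicit. Unset Printing Implicit Defensive.
Import Order.TTheory GRing.Theory Num.Theory.
Local Open Scope ring_scope.

Section Cheb.
Variable R : realFieldType.

(* pair (T_n, T_{n+1}) *)
Fixpoint cheb_pair (n : nat) : {poly R} * {poly R} :=
  match n with
  | 0%N => (1, 'X)
  | n'.+1 => let (a, b) := cheb_pair n' in (b, 2%:R *: 'X * b - a)
  end.

Definition cheb (n : nat) : {poly R} := (cheb_pair n).1.

(* P_k : T_{2k}(t) = (-1)^k + P_k(t^2); even_poly p has i-th coefficient p`_(2i) *)
Definition chebP (k : nat) : {poly R} :=
  even_poly (cheb k.*2) - ((-1) ^+ k)%:P.

(* Q_k : T_{2k+1}(t) = (-1)^k (2k+1) t + t Q_k(t^2) *)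
Definition chebQ (k : nat) : {poly R} :=
  odd_poly (cheb k.*2.+1) - ((-1) ^+ k * (k.*2.+1)%:R)%:P.

Definition chebR (k : nat) : {poly R} :=
  2%:R *: chebP k - (4%:R * (-1) ^+ k * (k.*2.+1)%:R) *: 'X.

End Cheb.

(* Main.v *)
Require Import Defs.
From HB Require Import structures.
From mathcomp Require Import all_boot all_order all_algebra.
From mathcomp Require Import ring lra.
Import Order.TTheory GRing.Theory Num.Theory.
Local Open Scope ring_scope.

Section H.
Variable R : realFieldType.

Lemma cheb0 : cheb R 0 = 1. Proof. by []. Qed.
Lemma cheb1 : cheb R 1 = 'X. Proof. by []. Qed.
Lemma chebSS n : cheb R n.+2 = 2%:R *: 'X * cheb R n.+1 - cheb R n.
Proof.
rewrite /cheb /=; case: (cheb_pair R n) => a b /=. by [].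
Qed.

Lemma hchebSS n (t : R) : (cheb R n.+2).[t] = 2%:R * t * (cheb R n.+1).[t] - (cheb R n).[t].
Proof. by rewrite chebSS !hornerE. Qed.

Fixpoint rot (t : R) (n : nat) : R * R :=
  match n with
  | 0%N => (1, 0)
  | n'.+1 => let (c, u) := rot t n' in (t * c + (t ^+ 2 - 1) * u, t * u + c)
  end.

Lemma cheb_rot n t : (cheb R n).[t] = (rot t n).1.
Proof.
suff : (cheb R n).[t] = (rot t n).1 /\ (cheb R n.+1).[t] = (rot t n.+1).1 by case.
elim: n => [|n [IH1 IH2]]; first by rewrite /= !hornerE; split => //; ring.
split => //; rewrite hchebSS IH1 IH2 /=; case: (rot t n) => c u /=; ring.
Qed.

Lemma cheb_odd_even n t : (cheb R n).[- t] = (-1) ^+ n * (cheb R n).[t].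
Proof.
suff : (cheb R n).[- t] = (-1) ^+ n * (cheb R n).[t] /\
   (cheb R n.+1).[- t] = (-1) ^+ n.+1 * (cheb R n.+1).[t] by case.
elim: n => [|n [IH1 IH2]]; first by rewrite /= !hornerE expr1; split => //; ring.
split => //; rewrite !hchebSS IH1 IH2 !exprS; ring.
Qed.

Lemma even_eval (p : {poly R}) t :
  (even_poly p).[t ^+ 2] = (p.[t] + p.[- t]) / 2%:R.
Proof.
have E x : p.[x] = (even_poly p).[x ^+ 2] + (odd_poly p).[x ^+ 2] * x.
  by rewrite -{1}(poly_even_odd p) !hornerE !horner_comp !hornerE.
rewrite (E t) (E (- t)) sqrrN; by field.
Qed.

Lemma chebR_eval k t : (chebR R k).[t ^+ 2] =
  2%:R * ((cheb R k.*2).[t] - (-1) ^+ k) - 4%:R * (-1) ^+ k * (k.*2.+1)%:R * t ^+ 2.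
Proof.
rewrite /chebR /chebP !hornerE even_eval cheb_odd_even -mul2n exprM sqrrN !expr1n mul1r.
by field.
Qed.


Lemma part1 k (t : R) : (1 <= k)%N ->
     (chebR R k).[t ^+ 2] =
       - (chebR R k.-1).[t ^+ 2] + 4%:R * t * (cheb R (k.*2.-1)).[t]
       + (-1) ^+ k.-1 * 8%:R * t ^+ 2.
Proof.
case: k => // m _ /=.
rewrite !chebR_eval doubleS hchebSS /= exprS.
rewrite -!natr1 -!muln2 !natrM. ring.
Qed.

Lemma pell n (t : R) : ((rot t n).1) ^+ 2 - (t ^+ 2 - 1) * ((rot t n).2) ^+ 2 = 1.
Proof.
elim: n => [|n IH] /=; first by ring.
move: IH; case: (rot t n) => c u /= IH; rewrite -[RHS]IH; ring.
Qed.

Lemma sq_le1 (x : R) : x ^+ 2 <= 1 -> `|x| <= 1.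
Proof. move=> h; rewrite ler_norml; apply/andP; split; nra. Qed.

Lemma cheb_le1 n (t : R) : t ^+ 2 <= 1 -> `|(cheb R n).[t]| <= 1.
Proof.
move=> ht; rewrite cheb_rot; apply: sq_le1; have := pell n t.
case: (rot t n) => c u /=; nra.
Qed.

Lemma rot2 n (t : R) : (rot t n.+2).1 =
   (2%:R * t ^+ 2 - 1) * (rot t n).1 + 2%:R * t * ((t ^+ 2 - 1) * (rot t n).2).
Proof. rewrite /=; case: (rot t n) => c u /=; ring. Qed.

Lemma cheb_odd k (t : R) : 0 <= t -> t <= 1 ->
  `|(cheb R k.*2.+1).[t]| <= (k.*2.+1)%:R * t.
Proof.
move=> t0 t1; rewrite cheb_rot.
elim: k => [|k IH]; first by rewrite /= mul1r; rewrite ger0_norm; lra.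
have P := pell k.*2.+1 t.
rewrite doubleS rot2.
move: IH P; case: (rot t k.*2.+1) => c u /=.
set N := (k.*2.+1)%:R.
have -> : (k.*2.+3)%:R = N + 2%:R :> R by rewrite /N -!natr1; ring.
move=> IH P.
have ht2 : t ^+ 2 <= 1 by nra.
have Q : (t ^+ 2 - 1) * u ^+ 2 = c ^+ 2 - 1 by lra.
have hu : 0 <= (1 - t ^+ 2) * u ^+ 2 by apply: mulr_ge0; [lra | apply: sqr_ge0].
have hc : c ^+ 2 <= 1 by lra.
have hw : `|(t ^+ 2 - 1) * u| <= 1.
  apply: sq_le1.
  have -> : ((t ^+ 2 - 1) * u) ^+ 2 = (t ^+ 2 - 1) * ((t ^+ 2 - 1) * u ^+ 2) by ring.
  rewrite Q. have := sqr_ge0 c. have := sqr_ge0 t. nra.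
move: IH hw; rewrite !ler_norml => /andP [a1 a2] /andP [b1 b2].
apply/andP; split; nra.
Qed.


Lemma part2 (t : R) (k : nat) : 0 < t -> t <= 1 ->
     `|(chebR R k).[t ^+ 2]| / t <=
       4%:R * (k.*2.+1)%:R * t
       + 4%:R * \sum_(1 <= j < k.+1) Num.min 1 ((j.*2.-1)%:R * t).
Proof.
move=> t0 t1; rewrite ler_pdivrMr //.
elim: k => [|k IH].
  rewrite big_geq // chebR_eval /= hornerE expr0 !mulr1 ler0_norm; last first.
    have := sqr_ge0 t; lra.
  have := sqr_ge0 t; rewrite mulr0 addr0; nra.
rewrite big_nat_recr //= part1 //= -/(k.*2) .
set S := \sum_(_ <= _ < _) _.
set N := (k.*2.+1)%:R.
have hm : `|(cheb R k.*2.+1).[t]| <= Num.min 1 (N * t).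
  rewrite le_min cheb_le1 ?cheb_odd //; [lra | nra].
have -> : (k.*2.+3)%:R = N + 2%:R :> R by rewrite /N -!natr1; ring.
move: IH hm; set r := (chebR R k).[t ^+ 2]; set c := (cheb R k.*2.+1).[t].
set m := Num.min _ _ => IH hm.
have h1 : `|- r + 4%:R * t * c + (-1) ^+ k * 8%:R * t ^+ 2| <=
   `|r| + 4%:R * t * `|c| + 8%:R * t ^+ 2.
  apply: (le_trans (ler_normD _ _)); apply: lerD.
    apply: (le_trans (ler_normD _ _)); rewrite normrN lerD //.
    by rewrite !normrM (ger0_norm (ltW t0)) ger0_norm.
  rewrite !normrM normrX normrN normr1 expr1n mul1r ger0_norm //.
  by rewrite ger0_norm ?(ltW t0) // expr2.
rewrite -/S -/N in IH.
apply: (le_trans h1).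
have hc0 : 0 <= `|c| := normr_ge0 c.
have : 4%:R * t * `|c| <= 4%:R * t * m by rewrite ler_pM2l //; lra.
nra.
Qed.

End H.

Theorem mainTheorem2 (R : realFieldType) :
  (forall (k : nat) (t : R), (1 <= k)%N ->
     (chebR R k).[t ^+ 2] =
       - (chebR R k.-1).[t ^+ 2] + 4%:R * t * (cheb R (k.*2.-1)).[t]
       + (-1) ^+ k.-1 * 8%:R * t ^+ 2)
  /\
  (forall (t : R) (k : nat), 0 < t -> t <= 1 ->
     `|(chebR R k).[t ^+ 2]| / t <=
       4%:R * (k.*2.+1)%:R * t
       + 4%:R * \sum_(1 <= j < k.+1) Num.min 1 ((j.*2.-1)%:R * t)).
Proof.
split; [exact: part1 | exact: part2].
Qed.
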